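(* Let $\psi$ be an injective map from the positive integers to the positive integers and let $A=\{\psi(n): n\ge 1\}$. Let $\alpha$ be a positive integer. For every nonnegative integer $n$, \[ p^{A}(n)=\sum_{(N_0,N_1,N_2,\dots)}\ \prod_{j\ge 0} p^{A}_{\alpha}(N_j), \] where the sum runs over all sequences $(N_0,N_1,N_2,\dots)$ of nonnegative integers satisfying $n=\sum_{i\ge 0}(\alpha+1)^{i}N_i$.
   Context: For a set $A$ of positive integers and a positive integer $\alpha$, $p^{A}_{\alpha}(n)$ denotes the number of partitions of $n$ into parts from $A$ in which each part occurs at most $\alpha$ times, and $p^{A}(n)$ denotes the number of partitions of $n$ into parts from $A$ with no restriction on multiplicities. By convention $p^{A}_{\alpha}(0)=p^{A}(0)=1$, so the product on the right is effectively finite. *)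

(* Defs.v *)
From mathcomp Require Import all_boot.
From mathcomp Require Import boolp.
Set Implicit Arguments. Unset Strict Implicit. Unset Printing Implicit Defensive.

Definition image_set (psi : nat -> nat) : pred nat :=
  fun a => `[< exists k, 0 < k /\ psi k = a >].

(* Number of partitions of n into parts from A (parts are positive), each
   multiplicity satisfying P.  A partition of n is encoded by its multiplicity
   function f : part i |-> f i, for parts i in {0..n}; multiplicities are at
   most n since parts are >= 1, so nothing is lost by the bound. *)
Definition part_count (A : pred nat) (P : nat -> bool) (n : nat) : nat :=
  #|[set f : {ffun 'I_n.+1 -> 'I_n.+1} |
      [forall i : 'I_n.+1, (nat_of_ord (f i) != 0) ==>
          [&& 0 < nat_of_ord i, A (nat_of_ord i) & P (nat_of_ord (f i))]]
      && (\sum_(i < n.+1) (nat_of_ord i) * (nat_of_ord (f i)) == n)]|.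

Definition pA (A : pred nat) (n : nat) : nat := part_count A predT n.

Definition pA_alpha (A : pred nat) (alpha n : nat) : nat :=
  part_count A (fun m => m <= alpha) n.

(* Main.v *)
Require Import Defs.
From mathcomp Require Import all_boot zify.
From mathcomp Require Import boolp.
Set Implicit Arguments. Unset Strict Implicit. Unset Printing Implicit Defensive.

Definition digit (b j x : nat) := (x %/ b ^ j) %% b.

Lemma digitS b j x : digit b j.+1 x = digit b j (x %/ b).
Proof. by rewrite /digit expnS divnMA. Qed.

Lemma digits_sum b K x : 0 < b -> \sum_(j < K) b ^ j * digit b j x = x %% b ^ K.
Proof.
move=> b0; elim: K x => [|K IH] x; first by rewrite big_ord0 expn0 modn1.
rewrite big_ord_recl /= expn0 mul1n {1}/digit expn0 divn1.
under eq_bigr => i _ do rewrite /bump /= add1n digitS expnS -mulnA.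
rewrite -big_distrr /= IH modn_divl expnS mulnC.
set y := x %% (b ^ K * b).
have -> : x %% b = y %% b by rewrite /y (modn_dvdm _ (dvdn_mull _ (dvdnn b))).
by rewrite [in RHS]mulnC -/y [in RHS](divn_eq y b) addnC mulnC.
Qed.

Lemma digit_sum b K (d : nat -> nat) j : 0 < b -> (forall k, d k < b) -> j < K ->
  digit b j (\sum_(k < K) b ^ k * d k) = d j.
Proof.
move=> b0; elim: K d j => [|K IH] d j hd //.
rewrite big_ord_recl /= expn0 mul1n.
under eq_bigr => i _ do rewrite /bump /= add1n expnS -mulnA.
rewrite -big_distrr /=.
case: j => [_|j hj].
  by rewrite /digit expn0 divn1 addnC mulnC modnMDl modn_small.
rewrite digitS mulnC addnC divnMDl // divn_small // addn0.
by apply: (IH (fun k => d k.+1)).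
Qed.

Lemma card_bij (T U : finType) (A : {set T}) (B : {set U}) (f : T -> U) (g : U -> T) :
  {in A, forall x, f x \in B} -> {in B, forall y, g y \in A} ->
  {in A, cancel f g} -> {in B, cancel g f} -> #|A| = #|B|.
Proof.
move=> fAB gBA fK gK.
rewrite -(card_in_imset (can_in_inj fK)).
suff -> : B = f @: A by [].
apply/setP => y; apply/idP/imsetP => [yB|[x xA ->]]; last exact: fAB.
by exists (g y); [apply: gBA | rewrite gK].
Qed.

Lemma card_set_sum (T : finType) (p : pred T) : #|[set x | p x]| = \sum_x (p x : nat).
Proof.
rewrite -sum1_card big_mkcond; apply: eq_bigr => x _; rewrite inE; by case: (p x).
Qed.

Lemma prod_bool (I : finType) (c : pred I) : \prod_i (c i : nat) = [forall i, c i].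
Proof.
case: (boolP [forall i, c i]) => [/forallP h|/forallPn [i hi]].
  by rewrite big1 // => i _; rewrite h.
by rewrite (bigD1 i) //= (negbTE hi) mul0n.
Qed.

Lemma sum_shrink (F : nat -> nat) m K : m <= K -> (forall k, m < k -> F k = 0) ->
  \sum_(i < K.+1) F i = \sum_(i < m.+1) F i.
Proof.
move=> mK F0; rewrite (big_ord_widen K.+1 F (_ : m.+1 <= K.+1)) //.
rewrite [RHS]big_mkcond; apply: eq_bigr => i _; case: ifP => // /negbT; rewrite -leqNgt => h; by rewrite F0.
Qed.

Definition validK K (A : pred nat) (P : nat -> bool) (f : {ffun 'I_K.+1 -> 'I_K.+1}) : bool :=
  [forall i : 'I_K.+1, (nat_of_ord (f i) != 0) ==>
     [&& 0 < nat_of_ord i, A (nat_of_ord i) & P (nat_of_ord (f i))]].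
Definition wtK K (f : {ffun 'I_K.+1 -> 'I_K.+1}) : nat :=
  \sum_(i < K.+1) (nat_of_ord i) * (nat_of_ord (f i)).

Lemma part_countE A P m : part_count A P m =
  #|[set f : {ffun 'I_m.+1 -> 'I_m.+1} | validK A P f && (wtK f == m)]|.
Proof. by []. Qed.

Lemma term_le K (f : {ffun 'I_K.+1 -> 'I_K.+1}) (i : 'I_K.+1) : i * f i <= wtK f.
Proof. by rewrite /wtK (bigD1 i) //= leq_addr. Qed.

Lemma valid_bnd K A P (f : {ffun 'I_K.+1 -> 'I_K.+1}) m (i : 'I_K.+1) :
  validK A P f -> wtK f = m -> (f i : nat) != 0 -> [/\ 0 < (i : nat), (i : nat) <= m & (f i : nat) <= m].
Proof.
move=> /forallP /(_ i) hv hw hfi; move: hv; rewrite hfi /= => /and3P [i0 _ _].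
have := term_le f i; rewrite hw => h.
split => //; apply: leq_trans h.
  by rewrite leq_pmulr // lt0n.
by rewrite leq_pmull.
Qed.

Lemma part_count_widen A P m K : m <= K -> part_count A P m =
  #|[set f : {ffun 'I_K.+1 -> 'I_K.+1} | validK A P f && (wtK f == m)]|.
Proof.
move=> mK; rewrite part_countE.
pose e (g : {ffun 'I_m.+1 -> 'I_m.+1}) : {ffun 'I_K.+1 -> 'I_K.+1} :=
  [ffun i : 'I_K.+1 => inord (if (i : nat) <= m then nat_of_ord (g (inord i)) else 0)].
pose r (f : {ffun 'I_K.+1 -> 'I_K.+1}) : {ffun 'I_m.+1 -> 'I_m.+1} :=
  [ffun i : 'I_m.+1 => inord (f (inord i))].
have ev g i : nat_of_ord (e g i) = if (i : nat) <= m then nat_of_ord (g (inord i)) else 0.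
  rewrite ffunE inordK //; case: ifP => // _; apply: leq_trans (ltn_ord _) _; by rewrite ltnS.
have rv f (i : 'I_m.+1) : validK A P f -> wtK f = m -> nat_of_ord (r f i) = f (inord i).
  move=> hv hw; rewrite ffunE inordK //.
  case: (eqVneq (nat_of_ord (f (inord i))) 0) => [->//|h].
  by case: (valid_bnd hv hw h).
have wte g : wtK (e g) = wtK g.
  pose F k := k * (if k <= m then nat_of_ord (g (inord k)) else 0).
  have -> : wtK (e g) = \sum_(i < K.+1) F i by apply: eq_bigr => i _; rewrite ev.
  rewrite (@sum_shrink F m K mK); last by move=> k hk; rewrite /F leqNgt hk muln0.
  by apply: eq_bigr => i _; rewrite /F -ltnS ltn_ord inord_val.
have wtr f : validK A P f -> wtK f = m -> wtK (r f) = wtK f.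
  move=> hv hw.
  pose F k := if k <= m then k * nat_of_ord (f (inord k)) else 0.
  have -> : wtK f = \sum_(i < K.+1) F i.
    apply: eq_bigr => i _; rewrite /F inord_val; case: ifP => // /negbT him.
    case: (eqVneq (nat_of_ord (f i)) 0) => [->|h]; first by rewrite muln0.
    by case: (valid_bnd hv hw h) => _ him2; rewrite him2 in him.
  rewrite (@sum_shrink F m K mK); last by move=> k hk; rewrite /F leqNgt hk.
  by apply: eq_bigr => i _; rewrite /F -ltnS ltn_ord rv.
apply: (@card_bij _ _ _ _ e r).
- move=> g; rewrite !inE => /andP [hv hw]; rewrite wte hw andbT.
  apply/forallP => i; rewrite ev; case: ifP => // him.
  move/forallP: hv => /(_ (inord i)); rewrite inordK //.
- move=> f; rewrite !inE => /andP [hv /eqP hw]; rewrite wtr // hw eqxx andbT.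
  apply/forallP => i; rewrite rv //.
  have iK : (i : nat) < K.+1 by apply: leq_trans (ltn_ord i) _.
  move/forallP: hv => /(_ (inord i)); rewrite inordK //.
- move=> g; rewrite inE => /andP [hv /eqP hw].
  have hv' : validK A P (e g).
    apply/forallP => i; rewrite ev; case: ifP => // him.
    move/forallP: hv => /(_ (inord i)); rewrite inordK //.
  apply/ffunP => i; apply: val_inj; rewrite /= rv //; last by rewrite wte.
  have iK : (i : nat) < K.+1 by apply: leq_trans (ltn_ord i) _.
  by rewrite ev inordK // -ltnS ltn_ord inord_val.
- move=> f; rewrite inE => /andP [hv /eqP hw].
  apply/ffunP => i; apply: val_inj; rewrite /= ev; case: ifP => him.
    by rewrite rv // inordK // inord_val.
  case: (eqVneq (nat_of_ord (f i)) 0) => [->//|h].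
  by case: (valid_bnd hv hw h) => _ him2; rewrite him2 in him.
Qed.

Lemma main_gen (A : pred nat) (alpha : nat) (alpha_pos : 0 < alpha) (n : nat) :
  pA A n =
  \sum_(N : {ffun 'I_n.+1 -> 'I_n.+1} |
          \sum_(i < n.+1) alpha.+1 ^ (nat_of_ord i) * nat_of_ord (N i) == n)
     \prod_(j < n.+1) pA_alpha A alpha (nat_of_ord (N j)).
Proof.
set b := alpha.+1.
have b1 : 1 < b by rewrite ltnS.
have b0 : 0 < b by [].
pose Pa := (fun m : nat => m <= alpha).
rewrite (eq_bigr (fun N : {ffun 'I_n.+1 -> 'I_n.+1} => \prod_(j < n.+1)
   \sum_(g : {ffun 'I_n.+1 -> 'I_n.+1}) (validK A Pa g && (wtK g == N j) : nat))); last first.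
  move=> N _; apply: eq_bigr => j _.
  by rewrite /pA_alpha (@part_count_widen _ _ (N j) n) ?card_set_sum // -ltnS.
under eq_bigr => N _ do rewrite bigA_distr_bigA.
rewrite exchange_big /=.
pose QG (G : {ffun 'I_n.+1 -> {ffun 'I_n.+1 -> 'I_n.+1}}) :=
  [forall j, validK A Pa (G j)] && (\sum_(j < n.+1) b ^ j * wtK (G j) == n).
rewrite (eq_bigr (fun G => (QG G : nat))); last first.
  move=> G _.
  under eq_bigr => N _ do rewrite prod_bool.
  rewrite /QG; case: (boolP [forall j, validK A Pa (G j)]) => hv /=.
  - case: (boolP (\sum_(j < n.+1) b ^ j * wtK (G j) == n)) => hs /=.
    + have wle j : wtK (G j) <= n.
        apply: (leq_trans _ (eq_leq (eqP hs))); rewrite (bigD1 j) //=; apply: leq_trans (leq_addr _ _).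
        by rewrite leq_pmull // expn_gt0 b0.
      pose N0 : {ffun 'I_n.+1 -> 'I_n.+1} := [ffun j => inord (wtK (G j))].
      have N0v j : nat_of_ord (N0 j) = wtK (G j) by rewrite ffunE inordK // ltnS.
      rewrite (bigD1 N0) /=; last by under eq_bigr do rewrite N0v.
      rewrite big1 ?addn0.
        suff -> : [forall j, validK A Pa (G j) && (wtK (G j) == N0 j)] by [].
        by apply/forallP => j; rewrite (forallP hv) N0v eqxx.
      move=> N /andP [_ hN]; apply/eqP; rewrite eqb0; apply/negP => /forallP h.
      move/eqP: hN; apply; apply/ffunP => j; apply: val_inj; rewrite /= N0v.
      by case/andP: (h j) => _ /eqP.
    + rewrite big1 // => N hC; apply/eqP; rewrite eqb0; apply/negP => /forallP h.
      move/negP: hs; apply; apply/eqP.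
      transitivity (\sum_(i < n.+1) b ^ i * nat_of_ord (N i)); last exact/eqP.
      apply: eq_bigr => j _.
      by case/andP: (h j) => _ /eqP ->.
  - rewrite big1 // => N _; apply/eqP; rewrite eqb0; apply/negP => /forallP h.
    move/negP: hv; apply; apply/forallP => j; by case/andP: (h j).
rewrite -card_set_sum /pA part_countE.
pose toG (f : {ffun 'I_n.+1 -> 'I_n.+1}) : {ffun 'I_n.+1 -> {ffun 'I_n.+1 -> 'I_n.+1}} :=
  [ffun j : 'I_n.+1 => [ffun i : 'I_n.+1 => (inord (digit b j (f i)) : 'I_n.+1)]].
pose sG (G : {ffun 'I_n.+1 -> {ffun 'I_n.+1 -> 'I_n.+1}}) (i : 'I_n.+1) :=
  \sum_(j < n.+1) b ^ j * nat_of_ord (G j i).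
pose toF (G : {ffun 'I_n.+1 -> {ffun 'I_n.+1 -> 'I_n.+1}}) : {ffun 'I_n.+1 -> 'I_n.+1} :=
  [ffun i => (inord (sG G i) : 'I_n.+1)].
have dle x j : digit b j x <= x := leq_trans (leq_mod _ _) (leq_div _ _).
have tg f j i : nat_of_ord (toG f j i) = digit b j (f i).
  by rewrite !ffunE inordK // ltnS; apply: leq_trans (dle _ _) _; rewrite -ltnS.
have d0 j : digit b j 0 = 0 by rewrite /digit div0n mod0n.
have sGf f i : sG (toG f) i = f i.
  rewrite /sG; under eq_bigr => j _ do rewrite tg.
  rewrite digits_sum // modn_small //.
  exact: leq_trans (ltn_ord (f i)) (ltnW (ltn_expl _ b1)).
have exch G : \sum_(i < n.+1) i * sG G i = \sum_(j < n.+1) b ^ j * wtK (G j).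
  rewrite /sG /wtK; under eq_bigr => i _ do rewrite big_distrr.
  rewrite exchange_big; apply: eq_bigr => j _; rewrite big_distrr.
  by apply: eq_bigr => i _ /=; rewrite mulnCA.
have sGle G : QG G -> forall i, sG G i <= n.
  move=> /andP [hv /eqP hs] i; case: (posnP i) => [i0|ipos].
    rewrite /sG big1 // => j _.
    move: (forallP (forallP hv j) i); rewrite i0 /= => /implyP h.
    case: (eqVneq (nat_of_ord (G j i)) 0) => [->|/h //]; by rewrite muln0.
  apply: leq_trans (leq_pmull _ ipos) _.
  apply: (leq_trans _ (eq_leq hs)); rewrite /sG big_distrr; apply: leq_sum => j _.
  by rewrite /= mulnCA leq_mul2l term_le orbT.
have tf G i : QG G -> nat_of_ord (toF G i) = sG G i.
  by move=> hq; rewrite ffunE inordK // ltnS sGle.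
have mem1 f : f \in [set f : {ffun 'I_n.+1 -> 'I_n.+1} | validK A predT f && (wtK f == n)] ->
    QG (toG f).
  rewrite inE => /andP [hv /eqP hw]; apply/andP; split.
    apply/forallP => j; apply/forallP => i; rewrite tg; apply/implyP => hd.
    case: (eqVneq (nat_of_ord (f i)) 0) => [h0|hf]; first by rewrite h0 d0 in hd.
    move/forallP: hv => /(_ i); rewrite hf /= => /and3P [-> -> _] /=.
    by rewrite /Pa -ltnS ltn_pmod.
  rewrite -exch; under eq_bigr => i _ do rewrite sGf.
  by rewrite -/(wtK f) hw.
apply: (@card_bij _ _ _ _ toG toF).
- by move=> f hf; rewrite inE mem1.
- move=> G; rewrite inE => hq; rewrite inE; apply/andP; split.
    apply/forallP => i; apply/implyP; rewrite tf // => hs.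
    have [j hj] : exists j, nat_of_ord (G j i) != 0.
      case: (boolP [exists j, nat_of_ord (G j i) != 0]) => [/existsP //|/existsPn h].
      rewrite /sG big1 ?eqxx // in hs => j _; move: (h j); rewrite negbK => /eqP ->.
      by rewrite muln0.
    case/andP: hq => hv _.
    by have /and3P [-> -> _] := implyP (forallP (forallP hv j) i) hj.
  rewrite /wtK; under eq_bigr => i _ do rewrite (tf G i hq).
  by rewrite exch; case/andP: hq.
- move=> f hf; apply/ffunP => i; apply: val_inj; by rewrite /= tf ?sGf ?mem1.
- move=> G; rewrite inE => hq.
  apply/ffunP => j; apply/ffunP => i; apply: val_inj; rewrite /= tg tf //.
  rewrite /sG (eq_bigr (fun k : 'I_n.+1 => b ^ k * nat_of_ord (G (inord k) i))); last first.
    by move=> k _; rewrite inord_val.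
  rewrite (@digit_sum b n.+1 (fun k => nat_of_ord (G (inord k) i)) j) ?inord_val //.
  move=> k; case: (eqVneq (nat_of_ord (G (inord k) i)) 0) => [->//|h].
  case/andP: hq => hv _.
  by have /and3P [_ _] := implyP (forallP (forallP hv (inord k)) i) h.
Qed.

Theorem mainTheorem2 (psi : nat -> nat)
    (psi_pos : forall k, 0 < k -> 0 < psi k)
    (psi_inj : forall k l, 0 < k -> 0 < l -> psi k = psi l -> k = l)
    (alpha : nat) (alpha_pos : 0 < alpha) (n : nat) :
  pA (image_set psi) n =
  \sum_(N : {ffun 'I_n.+1 -> 'I_n.+1} |
          \sum_(i < n.+1) alpha.+1 ^ (nat_of_ord i) * nat_of_ord (N i) == n)
     \prod_(j < n.+1) pA_alpha (image_set psi) alpha (nat_of_ord (N j)).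
Proof. exact: main_gen. Qed.
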